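(* For every integer $\Delta\ge 3$, there exists a connected graph $G_\Delta$ of order $n$ and maximum degree $\Delta$ such that $F_c(G_\Delta)=\left(\frac{\Delta}{\Delta+1}\right)n+1$.
   Context: Forcing process: given a set of initially colored vertices, at each step a colored vertex with exactly one non-colored neighbor forces (colors) that neighbor. A set $S\subseteq V(G)$ is a forcing set if iterating this process from $S$ eventually colors all vertices; it is a connected forcing set if moreover the induced subgraph $G[S]$ is connected. $F_c(G)$ is the minimum cardinality of a connected forcing set of $G$. *)

(* Defs.v *)
From HB Require Import structures.
From mathcomp Require Import all_boot all_order all_algebra.
Set Implicit Arguments. Unset Strict Implicit. Unset Printing Implicit Defensive.

Definition simple_graph (T : finType) (e : rel T) : Prop :=
  symmetric e /\ irreflexive e.

Definition nbhd (T : finType) (e : rel T) (x : T) : {set T} := [set y | e x y].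

Definition degree (T : finType) (e : rel T) (x : T) : nat := #|nbhd e x|.

Definition max_degree (T : finType) (e : rel T) : nat := \max_(x : T) degree e x.

Definition graph_connected (T : finType) (e : rel T) : Prop :=
  forall x y : T, connect e x y.

Definition induced_connected (T : finType) (e : rel T) (S : {set T}) : Prop :=
  forall x y, x \in S -> y \in S ->
    connect (fun a b => [&& e a b, a \in S & b \in S]) x y.

(* forces_to e S S' : starting from the coloured set S, the colour-change
   rule (a coloured vertex u whose unique uncoloured neighbour is v colours v)
   applied repeatedly can yield the coloured set S'. *)
Inductive forces_to (T : finType) (e : rel T) (S : {set T}) : {set T} -> Prop :=
| forces_refl : forces_to e S S
| forces_step (S' : {set T}) (u v : T) :
    forces_to e S S' -> u \in S' -> nbhd e u :\: S' = [set v] ->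
    forces_to e S (v |: S').

Definition forcing_set (T : finType) (e : rel T) (S : {set T}) : Prop :=
  forces_to e S [set: T].

Definition connected_forcing_set (T : finType) (e : rel T) (S : {set T}) : Prop :=
  forcing_set e S /\ induced_connected e S.

Definition is_Fc (T : finType) (e : rel T) (k : nat) : Prop :=
  (exists S : {set T}, connected_forcing_set e S /\ #|S| = k) /\
  (forall S : {set T}, connected_forcing_set e S -> k <= #|S|).

(* Main.v *)
Require Import Defs.
From mathcomp Require Import all_boot all_order all_algebra.
From mathcomp Require Import zify ring.
Import GRing.Theory Num.Theory.


Definition adj (D x y : nat) : bool :=
  [|| [&& D - 1 <= x, y == x.+1 & y <= 2*D+3],
      [&& D - 1 <= y, x == y.+1 & x <= 2*D+3],
      (x < D - 1) && (y == D - 1), (y < D - 1) && (x == D - 1),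
      (2*D+3 < x) && (y == 2*D+3) | (2*D+3 < y) && (x == 2*D+3)].

Lemma adj_leaf D z l : 3 <= D -> l < D - 1 -> adj D z l = (z == D - 1).
Proof. move=> hD hl; rewrite /adj; apply/idP/idP; lia. Qed.
Lemma adj_leafB D z l : 3 <= D -> 2*D+3 < l -> adj D z l = (z == 2*D+3).
Proof. move=> hD hl; rewrite /adj; apply/idP/idP; lia. Qed.
Lemma adj_sym D x y : adj D x y = adj D y x.
Proof. rewrite /adj; apply/idP/idP; lia. Qed.
Lemma adj_irr D x : adj D x x = false.
Proof. apply/negbTE/negP; rewrite /adj; lia. Qed.

Definition E (D : nat) : rel 'I_(3*D+2).+1 := fun x y => adj D x y.

Lemma E_simple D : simple_graph (E D).
Proof. split; [move=> x y; exact: adj_sym | move=> x; exact: adj_irr]. Qed.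

Definition eS D (S : {set 'I_(3*D+2).+1}) := fun a b => [&& E D a b, a \in S & b \in S].

Lemma conn_S D (S : {set 'I_(3*D+2).+1}) : 3 <= D ->
  (forall z : 'I_(3*D+2).+1, D-1 <= nat_of_ord z <= 2*D+3 -> z \in S) ->
  forall x, x \in S -> connect (eS D S) x (inord (D-1)).
Proof.
move=> hD hS.
have hin : forall k, D-1 <= k <= 2*D+3 -> (inord k : 'I_(3*D+2).+1) \in S.
  by move=> k hk; apply: hS; rewrite /= inordK; lia.
have spine : forall k, k <= D+4 -> connect (eS D S) (inord (D-1+k)) (inord (D-1)).
  elim=> [|k IH] hk; first by rewrite addn0 connect0.
  apply: connect_trans (IH (ltnW hk)); apply: connect1.
  rewrite /eS /E !hin; try lia.
  by rewrite /adj !inordK ?andbT; lia.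
move=> x xS.
case: (ltnP (nat_of_ord x) (D-1)) => h1.
  apply: connect1; rewrite /eS /E xS hin; try lia.
  by rewrite /adj !inordK ?andbT; lia.
case: (leqP (nat_of_ord x) (2*D+3)) => h2.
  have -> : x = inord (D-1+(x-(D-1))) by apply/val_inj; rewrite /= inordK; lia.
  apply: spine; lia.
apply: (@connect_trans _ _ (inord (D-1+(D+4)))); last by apply: spine.
apply: connect1; rewrite /eS /E xS hin; try lia.
by rewrite /adj !inordK ?andbT; lia.
Qed.

Lemma eS_sym D S : symmetric (eS D S).
Proof. by move=> x y; rewrite /eS /E adj_sym; case: (x \in S); case: (y \in S); rewrite ?andbT ?andbF. Qed.

Lemma induced_conn D (S : {set 'I_(3*D+2).+1}) : 3 <= D ->
  (forall z : 'I_(3*D+2).+1, D-1 <= nat_of_ord z <= 2*D+3 -> z \in S) ->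
  induced_connected (E D) S.
Proof.
move=> hD hS x y xS yS.
apply: (@connect_trans _ _ (inord (D-1))); first exact: conn_S.
rewrite (sym_connect_sym (eS_sym D S)); exact: conn_S.
Qed.

Lemma E_conn D : 3 <= D -> graph_connected (E D).
Proof.
move=> hD x y.
have := @induced_conn D setT hD (fun z _ => in_setT z) x y (in_setT x) (in_setT y).
move=> H.
have eqr : (fun a b : 'I_(3*D+2).+1 => [&& E D a b, a \in [set: 'I_(3 * D + 2).+1] & b \in [set: 'I_(3 * D + 2).+1]]) =2 E D.
  by move=> a b; rewrite !in_setT; case: (E D a b).
by rewrite (eq_connect eqr) in H.
Qed.

Definition gfun D x i :=
  if x < D-1 then D-1 else if x == D-1 then (if i < D-1 then i else D)
  else if x < 2*D+3 then (if i == 0 then x-1 else x+1)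
  else if x == 2*D+3 then (if i < D-1 then 2*D+4+i else 2*D+2) else 2*D+3.

Ltac ifcases := repeat (case: ifP => [/idP ?| /negbT ?]).

Lemma gfun_lt D x i : 3 <= D -> x < (3*D+2).+1 -> i < D -> gfun D x i < (3*D+2).+1.
Proof. move=> hD hx hi; rewrite /gfun; ifcases; lia. Qed.

Lemma gfun_cover D x y : 3 <= D -> x < (3*D+2).+1 -> y < (3*D+2).+1 -> adj D x y ->
  exists2 i, i < D & gfun D x i = y.
Proof.
move=> hD hx hy.
rewrite /adj /gfun => hxy.
case: (ltngtP x (D-1)) => h1.
- by apply: (@ex_intro2 _ _ _ 0); rewrite /=; ifcases; lia.
- case: (ltngtP x (2*D+3)) => h2.
  + case: (ltnP y x) => h3; [exists 0 | exists 1]; rewrite /=; ifcases; lia.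
  + by apply: (@ex_intro2 _ _ _ 0); rewrite /=; ifcases; lia.
  + case: (ltnP (2*D+3) y) => h3; [exists (y-(2*D+4)) | exists (D-1)]; rewrite /=; ifcases; lia.
- case: (ltnP y (D-1)) => h3; [exists y | exists (D-1)]; rewrite /=; ifcases; lia.
Qed.

Definition g D (x : 'I_(3*D+2).+1) (i : 'I_D) : 'I_(3*D+2).+1 := inord (gfun D x i).

Lemma nbhd_sub D x : 3 <= D -> nbhd (E D) x \subset (g D x) @: [set: 'I_D].
Proof.
move=> hD; apply/subsetP => y; rewrite inE /E => hy.
have [i hi hg] := gfun_cover D x y hD (ltn_ord x) (ltn_ord y) hy.
apply/imsetP; exists (Ordinal hi); first by rewrite inE.
by apply/val_inj; rewrite /= inordK // gfun_lt.
Qed.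

Lemma deg_le D x : 3 <= D -> degree (E D) x <= D.
Proof.
move=> hD; rewrite /degree; apply: leq_trans (subset_leq_card (nbhd_sub D x hD)) _.
by apply: leq_trans (leq_imset_card _ _) _; rewrite cardsT card_ord.
Qed.

Lemma deg_a D : 3 <= D -> D <= degree (E D) (inord (D-1)).
Proof.
move=> hD.
have va : nat_of_ord (inord (D-1) : 'I_(3*D+2).+1) = D-1 by rewrite inordK; lia.
have ginj : injective (g D (inord (D-1) : 'I_(3*D+2).+1)).
  move=> i j /(congr1 (@nat_of_ord _)).
  rewrite /g !inordK ?va; try (apply: gfun_lt; try exact: ltn_ord); try lia.
  move=> h; apply: ord_inj; move: h (ltn_ord i) (ltn_ord j); rewrite /gfun; ifcases; lia.
rewrite /degree -{1}(card_ord D) -cardsT -(card_imset _ ginj).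
apply: subset_leq_card; apply/subsetP => y /imsetP[i _ ->].
rewrite inE /E /g !inordK; try (apply: gfun_lt; try exact: ltn_ord); try lia.
move: (ltn_ord i); rewrite /adj /gfun; ifcases; lia.
Qed.

Lemma maxdeg D : 3 <= D -> max_degree (E D) = D.
Proof.
move=> hD; apply/eqP; rewrite eqn_leq; apply/andP; split.
  by apply/bigmax_leqP => x _; exact: deg_le.
exact: leq_trans (deg_a D hD) (leq_bigmax _).
Qed.

Lemma twin_forces (T : finType) (e : rel T) (S : {set T}) (x y : T) :
  x != y -> x \notin S -> y \notin S ->
  (forall z, z != x -> z != y -> e z x = e z y) ->
  forall S', forces_to e S S' -> x \notin S' /\ y \notin S'.
Proof.
move=> nxy xS yS tw S' F; elim: F => [|S1 u v F [IHx IHy] uS hN]; first by [].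
have nu : forall w, w \notin S1 -> u != w.
  by move=> w wS; apply/eqP => uw; move: uS; rewrite uw (negbTE wS).
have vx : v != x.
  apply/eqP => vx; subst v.
  have : y \in nbhd e u :\: S1.
    rewrite !inE IHy /= -tw; first by move: (set11 x); rewrite -hN !inE => /andP[].
      exact: nu.
    exact: nu.
  by rewrite hN inE eq_sym (negbTE nxy).
have vy : v != y.
  apply/eqP => vy; subst v.
  have : x \in nbhd e u :\: S1.
    rewrite !inE IHx /= tw; first by move: (set11 y); rewrite -hN !inE => /andP[].
      exact: nu.
    exact: nu.
  by rewrite hN inE (negbTE nxy).
by split; rewrite !inE negb_or ?IHx ?IHy andbT eq_sym ?vx ?vy.
Qed.

Lemma twin_forcing (T : finType) (e : rel T) (S : {set T}) (x y : T) :
  forcing_set e S -> x \notin S -> y \notin S ->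
  (forall z, z != x -> z != y -> e z x = e z y) -> x = y.
Proof.
move=> F xS yS tw; case: (eqVneq x y) => // nxy.
by have [] := twin_forces T e S x y nxy xS yS tw _ F; rewrite in_setT.
Qed.

Lemma eq_inord n (z : 'I_n.+1) k : k < n.+1 -> (z == inord k) = (nat_of_ord z == k).
Proof. by move=> hk; rewrite -(inj_eq val_inj) /= inordK. Qed.

Lemma lower D (S : {set 'I_(3*D+2).+1}) : 3 <= D ->
  connected_forcing_set (E D) S -> 3*D+1 <= #|S|.
Proof.
move=> hD [F C].
have twA : forall x y : 'I_(3*D+2).+1, nat_of_ord x < D-1 -> nat_of_ord y < D-1 ->
    x \notin S -> y \notin S -> x = y.
  move=> x y hx hy xS yS; apply: (twin_forcing _ _ _ _ _ F xS yS) => z _ _.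
  by rewrite /E !adj_leaf.
have twB : forall x y : 'I_(3*D+2).+1, 2*D+3 < nat_of_ord x -> 2*D+3 < nat_of_ord y ->
    x \notin S -> y \notin S -> x = y.
  move=> x y hx hy xS yS; apply: (twin_forcing _ _ _ _ _ F xS yS) => z _ _.
  by rewrite /E !adj_leafB.
have [xA xAS hxA] : exists2 x : 'I_(3*D+2).+1, x \in S & nat_of_ord x < D-1.
  case: (boolP ((inord 0 : 'I_(3*D+2).+1) \in S)) => h0.
    by exists (inord 0); rewrite // inordK; lia.
  case: (boolP ((inord 1 : 'I_(3*D+2).+1) \in S)) => h1.
    by exists (inord 1); rewrite // inordK; lia.
  have := twA _ _ _ _ h0 h1; rewrite !inordK; try lia.
  have h2 : 0 < D-1 by lia.
  have h3 : 1 < D-1 by lia.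
  by move=> /(_ h2 h3) /(congr1 (@nat_of_ord _)); rewrite !inordK; lia.
have [xB xBS hxB] : exists2 x : 'I_(3*D+2).+1, x \in S & 2*D+3 < nat_of_ord x.
  case: (boolP ((inord (3*D+2) : 'I_(3*D+2).+1) \in S)) => h0.
    by exists (inord (3*D+2)); rewrite // inordK; lia.
  case: (boolP ((inord (3*D+1) : 'I_(3*D+2).+1) \in S)) => h1.
    by exists (inord (3*D+1)); rewrite // inordK; lia.
  have := twB _ _ _ _ h0 h1; rewrite !inordK; try lia.
  have h2 : 2*D+3 < 3*D+2 by lia.
  have h3 : 2*D+3 < 3*D+1 by lia.
  by move=> /(_ h2 h3) /(congr1 (@nat_of_ord _)); rewrite !inordK; lia.
have spine : forall z : 'I_(3*D+2).+1, D-1 <= nat_of_ord z <= 2*D+3 -> z \in S.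
  move=> z hz; apply/negPn/negP => zS.
  have cl : closed (eS D S) [pred w : 'I_(3*D+2).+1 | nat_of_ord w < z].
    move=> u w /and3P[huw uS wS] /=.
    have uz : nat_of_ord u != nat_of_ord z.
      by apply: contraNneq zS => /ord_inj <-.
    have wz : nat_of_ord w != nat_of_ord z.
      by apply: contraNneq zS => /ord_inj <-.
    move: huw uz wz; rewrite !inE /E /adj => ? ? ?; apply/idP/idP; lia.
  have := @closed_connect _ (eS D S) _ cl xA xB (C xA xB xAS xBS).
  rewrite !inE /=.
  have -> : (nat_of_ord xA < z) = true by apply/idP; lia.
  have -> : (nat_of_ord xB < z) = false by apply/negbTE/negP; lia.
  by [].
pose LA := [set w : 'I_(3*D+2).+1 | nat_of_ord w < D-1].
pose LB := [set w : 'I_(3*D+2).+1 | 2*D+3 < nat_of_ord w].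
have sub : ~: S \subset (LA :&: ~: S) :|: (LB :&: ~: S).
  apply/subsetP => w; rewrite !inE => wS.
  have nsp : ~~ (D-1 <= nat_of_ord w <= 2*D+3) by apply: contraNN wS; exact: spine.
  rewrite wS !andbT; lia.
have cA : #|LA :&: ~: S| <= 1.
  apply/card_le1_eqP => x y; rewrite !inE => /andP[hx xS] /andP[hy yS]; exact: twA.
have cB : #|LB :&: ~: S| <= 1.
  apply/card_le1_eqP => x y; rewrite !inE => /andP[hx xS] /andP[hy yS]; exact: twB.
have := cardsC S; rewrite card_ord => hc.
have := subset_leq_card sub; rewrite cardsU => h.
set c := #|~: S| in hc h. set a := #|LA :&: ~: S| in h cA. set b := #|LB :&: ~: S| in h cB. lia.
Qed.

Lemma upper D : 3 <= D -> exists S : {set 'I_(3*D+2).+1},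
  connected_forcing_set (E D) S /\ #|S| = 3*D+1.
Proof.
move=> hD.
pose S0 := [set z : 'I_(3*D+2).+1 | 0 < nat_of_ord z < 3*D+2].
exists S0; split; last first.
  have := cardsC S0; rewrite card_ord.
  have -> : ~: S0 = [set inord 0; inord (3*D+2)].
    apply/setP => z; rewrite !inE !eq_inord; try lia.
    by move: (ltn_ord z) => ?; apply/idP/idP; lia.
  rewrite cards2 eq_inord ?inordK; try lia.
  have -> : (0 == 3*D+2) = false by apply/negbTE; lia.
  move=> /= h; set c := #|S0| in h *; lia.
split; last first.
  apply: induced_conn => // z hz; rewrite inE; lia.
have h1 : nbhd (E D) (inord (D-1)) :\: S0 = [set inord 0].
  apply/setP => z; rewrite !inE /E eq_inord ?inordK; try lia.
  by move: (ltn_ord z) => ?; rewrite /adj; apply/idP/idP; lia.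
have h2 : nbhd (E D) (inord (2*D+3)) :\: (inord 0 |: S0) = [set inord (3*D+2)].
  apply/setP => z; rewrite !inE /E !eq_inord ?inordK; try lia.
  by move: (ltn_ord z) => ?; rewrite /adj; apply/idP/idP; lia.
rewrite /forcing_set; have -> : [set: 'I_(3*D+2).+1] = inord (3*D+2) |: (inord 0 |: S0).
  apply/setP => z; rewrite !inE !eq_inord; try lia.
  by move: (ltn_ord z) => ?; apply/idP/idP; lia.
apply: forces_step h2; last by rewrite !inE inordK; lia.
apply: forces_step h1; last by rewrite !inE inordK; lia.
exact: forces_refl.
Qed.

Local Open Scope ring_scope.

Theorem proposition3 (Delta : nat) (hDelta : (3 <= Delta)%N) :
  exists (n : nat) (e : rel 'I_n),
    [/\ simple_graph e, graph_connected e, max_degree e = Delta &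
        exists k : nat, is_Fc e k /\
          (k%:R : rat) = (Delta%:R / (Delta.+1)%:R) * n%:R + 1].
Proof.
exists (3*Delta+2).+1, (E Delta); split.
- exact: E_simple.
- exact: E_conn.
- exact: maxdeg.
exists (3*Delta+1); split.
  split; first exact: upper.
  by move=> S HS; apply: lower.
have -> : ((3*Delta+2).+1 = Delta.+1 * 3)%N by lia.
rewrite natrM mulrA divfK ?pnatr_eq0 //.
rewrite -natrM -[1]/(1%:R) -natrD; congr (_%:R); lia.
Qed.
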